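(* Let $G=\prod_{i=1}^tK[a_i,b_i]$ with $2\le b_1\le\cdots\le b_t$. Let $S$ be an irredundant set in $G$ and let $T\subseteq\mathrm{pn}[S]$ be chosen so that each vertex of $S$ has exactly one private neighbor in $T$. If $v_1,v_2\in T$ are distinct with $p(v_1)=p(v_2)$, then $v_1,v_2\in\mathrm{Lon}(S)$.
   Context: $K[a,b]$ is the balanced complete $b$-partite graph with $b$ parts of size $a$. Label the vertices of $K[a_i,b_i]$ by $\{0,\dots,a_ib_i-1\}$ so that two are adjacent iff they are not congruent mod $b_i$. A vertex $v$ of the direct product $\prod_i K[a_i,b_i]$ is a tuple $(v(1),\dots,v(t))$, and $p(v)=(v(1)\bmod b_1,\dots,v(t)\bmod b_t)$; $u,v$ are adjacent iff $p(u),p(v)$ differ in every coordinate. For $S\subseteq V(G)$, $v\in S$: $\mathrm{pn}[v;S]=N[v]\setminus N[S\setminus\{v\}]$ (closed neighborhoods), $\mathrm{pn}[S]=\bigcup_{v\in S}\mathrm{pn}[v;S]$; $S$ is irredundant if every $\mathrm{pn}[v;S]$ is nonempty. $\mathrm{Lon}(S)$ is the set of vertices of $S$ isolated in $G[S]$. *)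

(* Defs.v *)
From mathcomp Require Import all_boot.
Set Implicit Arguments. Unset Strict Implicit. Unset Printing Implicit Defensive.

Definition vtx (t : nat) (a b : 'I_t -> nat) : finType :=
  {dffun forall i : 'I_t, 'I_(a i * b i)}.

Section Graph.
Variables (t : nat) (a b : 'I_t -> nat).
Local Notation V := (vtx a b).

Definition pr (v : V) : {ffun 'I_t -> nat} := [ffun i => (v i : nat) %% b i].

Definition adj (u v : V) : bool := [forall i, pr u i != pr v i].

Definition cnbr (v : V) : {set V} := [set u | (u == v) || adj v u].
Definition cnbrS (S : {set V}) : {set V} := \bigcup_(v in S) cnbr v.

Definition pn (v : V) (S : {set V}) : {set V} := cnbr v :\: cnbrS (S :\ v).
Definition pnS (S : {set V}) : {set V} := \bigcup_(v in S) pn v S.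

Definition irredundant (S : {set V}) : bool := [forall v in S, pn v S != set0].

Definition Lon (S : {set V}) : {set V} := [set v in S | [forall u in S, ~~ adj v u]].
End Graph.

(* Main.v *)
Require Import Defs.
From mathcomp Require Import all_boot.

Section Aux.
Variables (t : nat) (a b : 'I_t -> nat).

Lemma adj_sym (u v : vtx a b) : adj u v = adj v u.
Proof.
by apply/forallP/forallP => H i; rewrite eq_sym; apply: H.
Qed.

Lemma adj_pr (u v w : vtx a b) : pr u = pr v -> adj u w = adj v w.
Proof. by move=> e; rewrite /adj e. Qed.

Lemma adj_irr (u : vtx a b) : 0 < t -> ~~ adj u u.
Proof.
move=> ht; apply/forallP => /(_ (Ordinal ht)); by rewrite eqxx.
Qed.

Lemma in_cnbrS (S : {set vtx a b}) x w :
  x \in S -> w \in cnbr x -> w \in cnbrS S.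
Proof. by move=> xS wx; apply/bigcupP; exists x. Qed.

Lemma one_side (S T : {set vtx a b}) (ht : 0 < t)
  (hT : T \subset pnS S)
  (hTone : forall v, v \in S -> #|pn v S :&: T| = 1)
  (v1 v2 : vtx a b)
  (hv1 : v1 \in T) (hv2 : v2 \in T) (hne : v1 != v2)
  (hp : pr v1 = pr v2) : v1 \in Lon S.
Proof.
have /bigcupP [x xS v1x] := subsetP hT _ hv1.
have /bigcupP [y yS v2y] := subsetP hT _ hv2.
have xy : x != y.
  apply/eqP => exy; subst y.
  have [z hz] := cards1P (introT eqP (hTone x xS)).
  have : v1 \in pn x S :&: T by rewrite inE v1x hv1.
  have : v2 \in pn x S :&: T by rewrite inE v2y hv2.
  rewrite hz !inE => /eqP e2 /eqP e1; by rewrite e1 e2 eqxx in hne.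
have v1eq : v1 = x.
  apply/eqP; apply/negPn/negP => nv1x.
  move: v1x; rewrite /pn inE => /andP [_]; rewrite inE => /orP [e|ax1]; first by rewrite e in nv1x.
  have ax2 : adj x v2 by rewrite adj_sym -(adj_pr _ _ x hp) adj_sym.
  move: v2y; rewrite /pn inE => /andP [/negP H _]; apply: H.
  apply: (in_cnbrS _ x); first by rewrite !inE xS andbT.
  by rewrite inE ax2 orbT.
subst x.
rewrite inE xS /=; apply/forallP => u; apply/implyP => uS; apply/negP => au.
have nu : u != v1 by apply/eqP => e; subst u; move: (adj_irr v1 ht); rewrite au.
move: v1x; rewrite /pn inE => /andP [/negP H _]; apply: H.
apply: (in_cnbrS _ u); first by rewrite !inE nu uS.
by rewrite inE adj_sym au orbT.
Qed.
End Aux.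

Theorem lemma5p3 (t : nat) (a b : 'I_t -> nat)
  (ht : 0 < t)
  (hb2 : forall i : 'I_t, 2 <= b i)
  (hbmono : forall i j : 'I_t, i <= j -> b i <= b j)
  (S T : {set vtx a b})
  (hS : irredundant S)
  (hT : T \subset pnS S)
  (hTone : forall v, v \in S -> #|pn v S :&: T| = 1)
  (v1 v2 : vtx a b)
  (hv1 : v1 \in T) (hv2 : v2 \in T) (hne : v1 != v2)
  (hp : pr v1 = pr v2) :
  v1 \in Lon S /\ v2 \in Lon S.
Proof.
split; first exact: (@one_side t a b S T ht hT hTone v1 v2 hv1 hv2 hne hp).
by apply: (@one_side t a b S T ht hT hTone v2 v1 hv2 hv1); rewrite // eq_sym.
Qed.
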